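(* Let $C=L_1;\ldots;L_d$ be a sorting network of depth $d\ge2$ on $n$ channels containing no redundant comparators. Then every comparator $(i,j)\in L_{d-1}$ satisfies $j-i\le3$. Furthermore, if $j=i+2$ then $(i,i+1)\in L_d$ or $(i+1,i+2)\in L_d$; and if $j=i+3$ then both $(i,i+1)\in L_d$ and $(i+2,i+3)\in L_d$.
   Context: Channels are numbered $1,\ldots,n$. A comparator network of depth $d$ is a sequence $C=L_1;\ldots;L_d$ of layers; each layer is a set of comparators $(i,j)$ with $1\le i<j\le n$, each channel occurring in at most one comparator of a layer. An input $\bar x\in\{0,1\}^n$ propagates: $\bar x_0=\bar x$, and $\bar x_k$ is obtained from $\bar x_{k-1}$ by, for each $(i,j)\in L_k$, putting the minimum of the values at positions $i,j$ at position $i$ and the maximum at position $j$. The output is $C(\bar x)=\bar x_d$; $C$ is a sorting network if $C(\bar x)$ is sorted non-decreasingly for all $\bar x\in\{0,1\}^n$. A comparator $(i,j)\in L_\ell$ is redundant if for every input $\bar x$ we have $(\bar x_{\ell-1})_i\le(\bar x_{\ell-1})_j$. *)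

(* Defs.v *)
(* Channels are 1..n as in the paper; comparators are pairs (i,j). *)
From mathcomp Require Import all_boot.
Set Implicit Arguments. Unset Strict Implicit. Unset Printing Implicit Defensive.

Definition comparator := (nat * nat)%type.
Definition layer := seq comparator.
Definition network := seq layer.

Definition valid_layer (n : nat) (L : layer) : Prop :=
  (forall c, c \in L -> 1 <= c.1 /\ c.1 < c.2 /\ c.2 <= n) /\
  uniq (flatten [seq [:: c.1; c.2] | c <- L]).

Definition valid_network (n : nat) (C : network) : Prop :=
  forall L, L \in C -> valid_layer n L.

Definition state := nat -> bool.

(* apply one comparator: min (= &&) goes to i, max (= ||) goes to j *)
Definition apply_cmp (c : comparator) (x : state) : state :=
  fun k => if k == c.1 then x c.1 && x c.2
           else if k == c.2 then x c.1 || x c.2 else x k.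

(* apply a layer; since channels are disjoint, applying comparators in sequence
   is the same as applying them in parallel *)
Definition apply_layer (x : state) (L : layer) : state := foldl (fun y c => apply_cmp c y) x L.

Definition input_state (n : nat) (x : n.-tuple bool) : state :=
  fun k => nth false x k.-1.

Definition after (C : network) (k : nat) (x : state) : state := foldl apply_layer x (take k C).

Definition output (C : network) (x : state) : state := after C (size C) x.

(* layer L_l (1-based) *)
Definition layer_at (C : network) (l : nat) : layer := nth [::] C l.-1.

Definition is_sorting_network (n : nat) (C : network) : Prop :=
  forall x : n.-tuple bool, forall k, 1 <= k -> k < n ->
    output C (input_state x) k <= output C (input_state x) k.+1.

Definition redundant (n : nat) (C : network) (l : nat) (c : comparator) : Prop :=
  forall x : n.-tuple bool,
    after C l.-1 (input_state x) c.1 <= after C l.-1 (input_state x) c.2.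

Definition no_redundant (n : nat) (C : network) : Prop :=
  forall l c, 1 <= l <= size C -> c \in layer_at C l -> ~ redundant n C l c.

(* Main.v *)
Require Import Defs.
From mathcomp Require Import all_boot.
From mathcomp Require Import zify.
Set Implicit Arguments. Unset Strict Implicit. Unset Printing Implicit Defensive.

Fixpoint wt (n : nat) (x : state) : nat :=
  if n is n'.+1 then wt n' x + x n'.+1 else 0.

Fixpoint dist (n : nat) (x y : state) : nat :=
  if n is n'.+1 then dist n' x y + (x n'.+1 != y n'.+1) else 0.

Definition upd (x : state) q b : state := fun k => if k == q then b else x k.

Lemma wt_ext n (x y : state) : (forall k, 1 <= k <= n -> x k = y k) -> wt n x = wt n y.
Proof.
elim: n => [//|n IH] h /=; rewrite IH ?h //; first by rewrite leqnn.
by move=> k /andP[k1 kn]; apply: h; rewrite k1 (leq_trans kn).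
Qed.

Lemma dist0 n (x y : state) : dist n x y = 0 -> forall k, 1 <= k <= n -> x k = y k.
Proof.
elim: n => [|n IH] /=; first by move=> _ k; lia.
move/eqP; rewrite addn_eq0 => /andP[/eqP h1]; rewrite eqb0 negbK => /eqP h2 k /andP[k1].
rewrite leq_eqVlt ltnS => /orP[/eqP -> //|kn]; apply: IH => //; lia.
Qed.

Lemma wt_upd n (x : state) q (b : bool) : 1 <= q <= n -> wt n (upd x q b) + x q = wt n x + b.
Proof.
elim: n => [|n IH] hq /=; first lia.
case: (ltngtP q n.+1) => [lt|gt|eq]; [|lia|].
- have e : 1 <= q <= n by lia.
  move: (IH e); rewrite /upd (_ : (n.+1 == q) = false); last by apply/eqP; lia.
  lia.
- subst q; rewrite (wt_ext (y := x)); first by rewrite /upd eqxx; lia.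
  move=> k hk; rewrite /upd; case: eqP => //; lia.
Qed.

Lemma dist_ext n (x x' y : state) : (forall k, 1 <= k <= n -> x k = x' k) -> dist n x y = dist n x' y.
Proof.
elim: n => [//|n IH] h /=; rewrite IH ?h //; first by rewrite leqnn.
by move=> k /andP[k1 kn]; apply: h; rewrite k1 (leq_trans kn).
Qed.

Lemma dist_upd n (x y : state) q : 1 <= q <= n ->
  dist n (upd x q (y q)) y + (x q != y q) = dist n x y.
Proof.
elim: n => [|n IH] hq /=; first lia.
case: (ltngtP q n.+1) => [lt|gt|eq]; [|lia|].
- have e : 1 <= q <= n by lia.
  move: (IH e); rewrite /upd (_ : (n.+1 == q) = false); last by apply/eqP; lia.
  lia.
- subst q. rewrite /upd eqxx eqxx /= addn0.
  congr (_ + _). apply: dist_ext => k hk; rewrite /upd; case: eqP => //; lia.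
Qed.

Lemma wt_mono n (x y : state) : (forall k, 1 <= k <= n -> x k <= y k) -> wt n x <= wt n y.
Proof.
elim: n => [//|n IH] h /=; apply: leq_add; first by apply: IH => k hk; apply: h; lia.
apply: h; lia.
Qed.

Lemma dist_pos n (x y : state) : 0 < dist n x y -> exists2 q, 1 <= q <= n & x q != y q.
Proof.
elim: n => [//|n IH] /=; case: (boolP (x n.+1 != y n.+1)) => h.
  by move=> _; exists n.+1 => //; lia.
rewrite addn0 => /IH [q hq hq']; exists q => //; lia.
Qed.

Lemma path n (P : state -> Prop) lo hi (v : state) :
  lo < hi -> lo <= wt n v <= hi ->
  (forall x y : state, P x -> (forall k, x k <= y k) -> wt n y <= hi -> P y) ->
  (forall x z : state, P x -> (forall k, z k <= x k) -> lo <= wt n z -> P z) ->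
  forall x, P x -> exists x', P x' /\ forall k, 1 <= k <= n -> x' k = v k.
Proof.
move=> hlh hv up down x Px.
move: {2}(dist n x v) (leqnn (dist n x v)) => m.
elim: m x Px => [|m IH] x Px hd.
  by exists x; split => //; apply: dist0; lia.
have remove : forall q, 1 <= q <= n -> x q -> ~~ v q -> lo < wt n x ->
    exists x', P x' /\ forall k, 1 <= k <= n -> x' k = v k.
  move=> q hq xq vq hw; apply: (IH (upd x q false)).
  - apply: (down x) => //; first by move=> k; rewrite /upd; case: eqP.
    have := wt_upd x false hq; rewrite xq; lia.
  - have := dist_upd x v hq; rewrite (negbTE vq) xq /=; lia.
have add : forall q, 1 <= q <= n -> ~~ x q -> v q -> wt n x < hi ->
    exists x', P x' /\ forall k, 1 <= k <= n -> x' k = v k.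
  move=> q hq xq vq hw; apply: (IH (upd x q true)).
  - apply: (up x) => //; first by move=> k; rewrite /upd; case: eqP => // _; case: (x k).
    have := wt_upd x true hq; rewrite (negbTE xq); lia.
  - have := dist_upd x v hq; rewrite vq (negbTE xq) /=; lia.
case: (posnP (dist n x v)) => [d0|].
  by exists x; split => //; apply: dist0.
move/dist_pos => [q hq].
case xq: (x q); case vq: (v q) => // _.
-
  case: (ltnP lo (wt n x)) => [hw|hw]; first by apply: (remove q) => //; rewrite vq.
  case hB: (has (fun k => ~~ x k && v k) (iota 1 n)).
    move/hasP: hB => [q' hq' /andP[xq' vq']]; rewrite mem_iota in hq'.
    case: (ltnP (wt n x) hi) => [hw'|hw']; first by apply: (add q') => //; lia.
    lia.
  have hle : forall k, 1 <= k <= n -> v k <= upd x q false k.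
    move=> k hk; rewrite /upd; case: eqP => [->|_]; first by rewrite vq.
    case vk: (v k) => //; case xk: (x k) => //.
    have : has (fun k => ~~ x k && v k) (iota 1 n).
      by apply/hasP; exists k; [rewrite mem_iota; lia | rewrite xk vk].
    by rewrite hB.
  have := wt_mono hle; have := wt_upd x false hq; rewrite xq; lia.
- case: (ltnP (wt n x) hi) => [hw|hw]; first by apply: (add q) => //; rewrite xq.
  case hA: (has (fun k => x k && ~~ v k) (iota 1 n)).
    move/hasP: hA => [q' hq' /andP[xq' vq']]; rewrite mem_iota in hq'.
    case: (ltnP lo (wt n x)) => [hw'|hw']; first by apply: (remove q') => //; lia.
    lia.
  have hle : forall k, 1 <= k <= n -> upd x q true k <= v k.
    move=> k hk; rewrite /upd; case: eqP => [->|_]; first by rewrite vq.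
    case vk: (v k); first by case: (x k).
    case xk: (x k) => //.
    have : has (fun k => x k && ~~ v k) (iota 1 n).
      by apply/hasP; exists k; [rewrite mem_iota; lia | rewrite xk vk].
    by rewrite hA.
  have := wt_mono hle; have := wt_upd x true hq; rewrite xq; lia.
Qed.

Lemma wt_sorted n m : wt n (fun k => m < k) = n - m.
Proof. elim: n => [//|n IH] /=; rewrite IH; case: (ltnP m n.+1) => /= h; lia. Qed.

Lemma wt_ge n (o : state) p : 1 <= p -> (forall k, p <= k <= n -> o k) -> n.+1 - p <= wt n o.
Proof.
elim: n => [|n IH] hp h /=; first lia.
case: (leqP p n.+1) => hpn.
  rewrite h; last lia.
  have := IH hp (fun k hk => h k ltac:(lia)); lia.
lia.
Qed.

Lemma wt_le n (o : state) p : p <= n -> (forall k, 1 <= k <= p -> ~~ o k) -> wt n o <= n - p.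
Proof.
elim: n p => [|n IH] p hp h /=; first lia.
case: (leqP p n) => hpn.
  have := IH p hpn h; case: (o n.+1); lia.
have hp' : p = n.+1 by lia. subst p.
have := IH n (leqnn n) (fun k hk => h k ltac:(lia)).
rewrite (negbTE (h n.+1 _)); last lia. lia.
Qed.

Lemma le_true (a b : bool) : a <= b -> a -> b.
Proof. by case: a; case: b. Qed.

Lemma key n (G : state -> state) i j lo hi :
  (forall x y : state, (forall k, x k <= y k) -> forall k, G x k <= G y k) ->
  (forall x y : state, (forall k, 1 <= k <= n -> x k = y k) -> G x i = G y i /\ G x j = G y j) ->
  (forall m, G (fun k => m < k) i <= G (fun k => m < k) j) ->
  (forall y, G y i -> G y j -> hi < wt n y) ->
  (forall z, ~~ G z i -> ~~ G z j -> wt n z < lo) ->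
  lo < hi -> hi <= n ->
  forall x, G x i -> G x j.
Proof.
move=> mono loc srt F1 F2 hlh hn x Gi.
apply/negP => Gj.
pose P := fun y => G y i /\ ~~ G y j.
have hv : lo <= wt n (fun k => n - lo < k) <= hi by rewrite wt_sorted; lia.
have : exists x', P x' /\ forall k, 1 <= k <= n -> x' k = (n - lo < k).
apply: (@path n P lo hi _ hlh hv _ _ x).
- move=> x1 y1 [G1 G2] le hw; split; first exact: le_true (mono _ _ le i) G1.
  apply/negP => G3; have := F1 _ (le_true (mono _ _ le i) G1) G3; lia.
- move=> x1 z1 [G1 G2] le hw; split; last first.
    apply/negP => G3; by rewrite (le_true (mono _ _ le j) G3) in G2.
  apply/negP => /negP G3; have : ~~ G z1 j.
    apply/negP => G4; by rewrite (le_true (mono _ _ le j) G4) in G2.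
  move=> G4; have := F2 _ G3 G4; lia.
- by split; [exact: Gi | apply/negP; exact: Gj].
move=> [x' [[Gi' Gj'] ag]].
have [e1 e2] := loc _ _ ag.
have := srt (n - lo); rewrite -e1 -e2 Gi'; move: Gj'; by case: (G x' j).
Qed.

Definition okl n (L : layer) := forall c, c \in L -> 1 <= c.1 /\ c.1 < c.2 /\ c.2 <= n.

Lemma cmp_mono c (x y : state) : (forall k, x k <= y k) -> forall k, apply_cmp c x k <= apply_cmp c y k.
Proof.
move=> h k; rewrite /apply_cmp.
have h1 := h c.1; have h2 := h c.2; have h3 := h k.
case: (k == c.1); last case: (k == c.2) => //.
- by move: h1 h2; case: (x c.1); case: (y c.1); case: (x c.2); case: (y c.2).
- by move: h1 h2; case: (x c.1); case: (y c.1); case: (x c.2); case: (y c.2).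
Qed.

Lemma cmp_loc n c (x y : state) : 1 <= c.1 <= n -> 1 <= c.2 <= n ->
  (forall k, 1 <= k <= n -> x k = y k) -> forall k, 1 <= k <= n -> apply_cmp c x k = apply_cmp c y k.
Proof. by move=> h1 h2 h k hk; rewrite /apply_cmp !h. Qed.

Lemma cmp_wt n c (x : state) : 1 <= c.1 -> c.1 < c.2 -> c.2 <= n -> wt n (apply_cmp c x) = wt n x.
Proof.
move=> h1 h12 h2.
rewrite (wt_ext (y := upd (upd x c.1 (x c.1 && x c.2)) c.2 (x c.1 || x c.2))); last first.
  move=> k _; rewrite /apply_cmp /upd; case: eqP => [->|]; last by case: eqP.
  by rewrite (_ : (c.1 == c.2) = false) //; apply/eqP; lia.
have e1 := wt_upd (upd x c.1 (x c.1 && x c.2)) (x c.1 || x c.2) (n := n) (q := c.2) ltac:(lia).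
have e2 := wt_upd x (x c.1 && x c.2) (n := n) (q := c.1) ltac:(lia).
have ee : upd x c.1 (x c.1 && x c.2) c.2 = x c.2 by rewrite /upd; case: eqP => //; lia.
rewrite ee in e1; move: e1 e2.
by case: (x c.1); case: (x c.2) => /=; lia.
Qed.

Lemma cmp_srt c (y : state) m : c.1 < c.2 -> (forall k, y k = (m < k)) ->
  forall k, apply_cmp c y k = (m < k).
Proof.
move=> h12 h k; rewrite /apply_cmp !h.
case: eqP => [->|_]; last case: eqP => [->|_] //.
- case: (ltnP m c.1) => /= h'; [have ->: m < c.2 by lia | by []]. by [].
- case: (ltnP m c.1) => /= h' //. have ->: m < c.2 by lia. by [].
Qed.

Lemma lay_mono L (x y : state) : (forall k, x k <= y k) -> forall k, apply_layer x L k <= apply_layer y L k.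
Proof. rewrite /apply_layer; elim: L x y => [//|c L IH] x y h /=; apply: IH; exact: cmp_mono. Qed.

Lemma lay_loc n L (x y : state) : okl n L ->
  (forall k, 1 <= k <= n -> x k = y k) -> forall k, 1 <= k <= n -> apply_layer x L k = apply_layer y L k.
Proof.
rewrite /apply_layer; elim: L x y => [//|c L IH] x y hL h /=; apply: IH.
  by move=> c' hc'; apply: hL; rewrite inE hc' orbT.
have [h1 [h12 h2]] := hL c (mem_head _ _).
move: h1 h12 h2; case: c {hL} => a b /= h1 h12 h2. apply: (cmp_loc (n := n) (c := (a,b))) => //=; lia.
Qed.

Lemma lay_wt n L (x : state) : okl n L -> wt n (apply_layer x L) = wt n x.
Proof.
rewrite /apply_layer; elim: L x => [//|c L IH] x hL /=; rewrite IH.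
  by have [h1 [h12 h2]] := hL c (mem_head _ _); apply: cmp_wt.
by move=> c' hc'; apply: hL; rewrite inE hc' orbT.
Qed.

Lemma lay_srt n L (y : state) m : okl n L -> (forall k, y k = (m < k)) ->
  forall k, apply_layer y L k = (m < k).
Proof.
rewrite /apply_layer; elim: L y => [//|c L IH] y hL h /=; apply: IH.
  by move=> c' hc'; apply: hL; rewrite inE hc' orbT.
have [h1 [h12 h2]] := hL c (mem_head _ _).
exact: cmp_srt.
Qed.

Definition okn n (Ls : network) := forall L, L \in Ls -> okl n L.

Lemma net_mono Ls (x y : state) : (forall k, x k <= y k) -> forall k, foldl apply_layer x Ls k <= foldl apply_layer y Ls k.
Proof. elim: Ls x y => [//|L Ls IH] x y h /=; apply: IH; exact: lay_mono. Qed.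

Lemma net_loc n Ls (x y : state) : okn n Ls ->
  (forall k, 1 <= k <= n -> x k = y k) -> forall k, 1 <= k <= n -> foldl apply_layer x Ls k = foldl apply_layer y Ls k.
Proof.
elim: Ls x y => [//|L Ls IH] x y hL h /=; apply: IH.
  by move=> L' hL'; apply: hL; rewrite inE hL' orbT.
by apply: lay_loc => //; apply: hL; exact: mem_head.
Qed.

Lemma net_wt n Ls (x : state) : okn n Ls -> wt n (foldl apply_layer x Ls) = wt n x.
Proof.
elim: Ls x => [//|L Ls IH] x hL /=; rewrite IH.
  by apply: lay_wt; apply: hL; exact: mem_head.
by move=> L' hL'; apply: hL; rewrite inE hL' orbT.
Qed.

Lemma net_srt n Ls (y : state) m : okn n Ls -> (forall k, y k = (m < k)) ->
  forall k, foldl apply_layer y Ls k = (m < k).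
Proof.
elim: Ls y => [//|L Ls IH] y hL h /=; apply: IH.
  by move=> L' hL'; apply: hL; rewrite inE hL' orbT.
by apply: lay_srt => //; apply: hL; exact: mem_head.
Qed.

Definition ends (L : layer) := flatten [seq [:: c.1; c.2] | c <- L].

Lemma ends_l (L : layer) p q : (p, q) \in L -> p \in ends L.
Proof. by move=> h; apply/flatten_mapP; exists (p, q) => //; rewrite inE eqxx. Qed.

Lemma ends_r (L : layer) p q : (p, q) \in L -> q \in ends L.
Proof. by move=> h; apply/flatten_mapP; exists (p, q) => //; rewrite !inE eqxx orbT. Qed.

Lemma ends_inv (L : layer) k : k \in ends L -> exists2 c, c \in L & (k = c.1 \/ k = c.2).
Proof.
move/flatten_mapP => [c hc]; rewrite !inE => /orP[/eqP->|/eqP->]; exists c => //; tauto.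
Qed.

Lemma cmp_other c (x : state) k : k != c.1 -> k != c.2 -> apply_cmp c x k = x k.
Proof. by rewrite /apply_cmp => /negbTE -> /negbTE ->. Qed.

Lemma lay_notin L (x : state) k : k \notin ends L -> apply_layer x L k = x k.
Proof.
rewrite /apply_layer; elim: L x => [//|c L IH] x /=.
rewrite !inE !negb_or => /andP[k1 /andP[k2 kL]].
by rewrite IH // cmp_other.
Qed.

Lemma lay_pair L (x : state) p q : uniq (ends L) -> (p, q) \in L ->
  apply_layer x L p = x p && x q /\ apply_layer x L q = x p || x q.
Proof.
rewrite /apply_layer; elim: L x => [//|c L IH] x /=.
rewrite !inE negb_or => /andP[/andP[c12 c1L] /andP[c2L uL]].
move=> /orP[/eqP e|hin].
- subst c => /=.
  have := @lay_notin L (apply_cmp (p, q) x) p c1L.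
  have := @lay_notin L (apply_cmp (p, q) x) q c2L.
  rewrite /apply_layer => -> ->; rewrite /apply_cmp /= eqxx.
  by rewrite eq_sym (negbTE c12) eqxx.
- have [-> ->] := IH (apply_cmp c x) uL hin.
  have hp := ends_l hin; have hq := ends_r hin.
  rewrite !cmp_other //; apply/negP => /eqP e; subst;
    by [rewrite hp in c1L | rewrite hp in c2L | rewrite hq in c1L | rewrite hq in c2L].
Qed.

Lemma impl_le (a b : bool) : (a -> b) -> a <= b.
Proof. by case: a; case: b => // /(_ isT). Qed.

Lemma srt_le m i j : i < j -> (m < i) <= (m < j).
Proof. move=> h; apply: impl_le => h'; lia. Qed.

Lemma sorted_up (o : state) n p : (forall k, 1 <= k < n -> o k <= o k.+1) ->
  1 <= p -> o p -> forall k, p <= k <= n -> o k.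
Proof.
move=> hs hp op; elim=> [|k IH] hk; first lia.
case: (ltngtP p k.+1) => [lt|gt|eq]; [|lia|by rewrite -eq].
apply: (le_true (hs k _)); first lia. apply: IH; lia.
Qed.

Lemma after_S C l (x : state) : l < size C -> after C l.+1 x = apply_layer (after C l x) (nth [::] C l).
Proof. by move=> h; rewrite /after (take_nth [::] h) foldl_rcons. Qed.
Theorem corollary2 (n : nat) (C : network) :
  valid_network n C -> 2 <= size C ->
  is_sorting_network n C -> no_redundant n C ->
  forall i j, (i, j) \in layer_at C (size C).-1 ->
    j - i <= 3 /\
    (j = i + 2 -> (i, i + 1) \in layer_at C (size C) \/ (i + 1, i + 2) \in layer_at C (size C)) /\
    (j = i + 3 -> (i, i + 1) \in layer_at C (size C) /\ (i + 2, i + 3) \in layer_at C (size C)).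
Proof.
move=> hv hd hs hnr i j hij.
have okC : okn n C by move=> L /hv [].
have okT : forall l, okn n (take l C) by move=> l L /mem_take /okC.
have gmono : forall l (x y : state), (forall k, x k <= y k) -> forall k, after C l x k <= after C l y k.
  by move=> l x y h k; apply: net_mono.
have gloc : forall l (x y : state), (forall k, 1 <= k <= n -> x k = y k) ->
    forall k, 1 <= k <= n -> after C l x k = after C l y k.
  by move=> l x y h k hk; apply: net_loc.
have gsrt : forall l m a b, a < b -> after C l (fun k => m < k) a <= after C l (fun k => m < k) b.
  move=> l m a b hab; rewrite /after !(net_srt (m := m) (okT l) (y := fun k => m < k)) //.
  exact: srt_le.
have outwt : forall y, wt n (output C y) = wt n y by move=> y; apply: net_wt.
have outsort : forall (y : state) k, 1 <= k < n -> output C y k <= output C y k.+1.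
  move=> y k hk.
  pose t := @Tuple n bool (mkseq (fun k => y k.+1) n) (introT eqP (size_mkseq _ _)).
  have ag : forall k, 1 <= k <= n -> input_state t k = y k.
    move=> k' hk'; rewrite /input_state /= nth_mkseq; last lia.
    by congr y; lia.
  rewrite /output -!(gloc _ _ _ ag); try lia.
  apply: (hs t k); lia.
have o_true : forall y p, 1 <= p <= n -> output C y p -> n.+1 - p <= wt n y.
  move=> y p hp op; rewrite -outwt; apply: wt_ge; first lia.
  apply: (sorted_up (outsort y)) => //; lia.
have o_false : forall y p, 1 <= p <= n -> ~~ output C y p -> wt n y <= n - p.
  move=> y p hp op; rewrite -outwt; apply: wt_le; first lia.
  move=> k hk; apply/negP => ok; move/negP: op; apply.
  apply: (sorted_up (outsort y) _ ok); lia.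
set d := size C in hd hij *.
set L2 := layer_at C d. set L1 := layer_at C d.-1.
have dE : d = size C := erefl.
have vL2 : valid_layer n L2 by apply: hv; rewrite /L2 /layer_at; apply: mem_nth; rewrite -dE; lia.
have vL1 : valid_layer n L1 by apply: hv; rewrite /L1 /layer_at; apply: mem_nth; rewrite -dE; lia.
have e2 : forall y, output C y = apply_layer (after C d.-1 y) L2.
  move=> y; rewrite /output -/d; have -> : d = d.-1.+1 by lia.
  by rewrite after_S; last lia.
have e1 : forall y, after C d.-1 y = apply_layer (after C d.-2 y) L1.
  move=> y; have -> : d.-1 = d.-2.+1 by lia.
  by rewrite after_S; last lia.
have adj : forall p q, (p, q) \in L2 -> q = p.+1.
  move=> p q hpq; have [h1 [h12 h2]] := vL2.1 _ hpq; rewrite /= in h1 h12 h2.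
  case: (leqP q p.+1) => hq; first lia.
  exfalso; apply: (hnr d (p, q) _ hpq); first lia.
  move=> x /=; apply: impl_le; move: (input_state x) => x0.
  apply: (key (G := after C d.-1) (n := n) (lo := n.+1 - q) (hi := n - p)).
  - by move=> x1 y1 hxy; apply: gmono.
  - move=> x1 y1 hxy; split; apply: gloc => //; lia.
  - move=> m; apply: gsrt; lia.
  - move=> y Gp Gq; have := o_true y p ltac:(lia).
    rewrite e2 (lay_pair _ vL2.2 hpq).1 Gp Gq => /(_ isT); lia.
  - move=> z Gp Gq; have := o_false z q ltac:(lia).
    rewrite e2 (lay_pair _ vL2.2 hpq).2 (negbTE Gp) (negbTE Gq) => /(_ isT); lia.
  - lia.
  - lia.
have [h1 [h12 h2]] := vL1.1 _ hij; rewrite /= in h1 h12 h2.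
have main : j <= i.+1 + ((i, i.+1) \in L2) + ((j.-1, j) \in L2).
  case: (leqP j (i.+1 + ((i, i.+1) \in L2) + ((j.-1, j) \in L2))) => // hj.
  exfalso; apply: (hnr d.-1 (i, j) _ hij); first lia.
  move=> x /=; apply: impl_le; move: (input_state x) => x0.
  apply: (key (G := after C d.-2) (n := n) (lo := n.+1 - j + ((j.-1, j) \in L2)) (hi := n - i - ((i, i.+1) \in L2))).
  - by move=> x1 y1 hxy; apply: gmono.
  - move=> x1 y1 hxy; split; apply: gloc => //; lia.
  - move=> m; apply: gsrt; lia.
  - move=> y Gi Gj.
    have [Hi Hj] := lay_pair (after C d.-2 y) vL1.2 hij.
    rewrite Gi Gj /= -e1 in Hi Hj.
    case: (boolP (i \in ends L2)) => [/ends_inv [c hc [ei|ei]]|ni].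
    + move: hc; case: c ei => a b /= <- hc.
      have eb := adj _ _ hc; subst b.
      have := o_true y i.+1 ltac:(have := vL2.1 _ hc; rewrite /=; lia).
      rewrite e2 (lay_pair _ vL2.2 hc).2 Hi => /(_ isT).
      rewrite hc; lia.
    + move: hc; case: c ei => a b /= <- hc.
      have := o_true y i ltac:(lia).
      rewrite e2 (lay_pair _ vL2.2 hc).2 Hi orbT => /(_ isT). lia.
    + have := o_true y i ltac:(lia).
      rewrite e2 lay_notin // Hi => /(_ isT). lia.
  - move=> y Gi Gj.
    have [Hi Hj] := lay_pair (after C d.-2 y) vL1.2 hij.
    rewrite (negbTE Gi) (negbTE Gj) /= -e1 in Hi Hj.
    case: (boolP (j \in ends L2)) => [/ends_inv [c hc [ej|ej]]|nj].
    + move: hc; case: c ej => a b /= <- hc.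
      have := o_false y j ltac:(lia).
      rewrite e2 (lay_pair _ vL2.2 hc).1 Hj => /(_ isT). lia.
    + move: hc; case: c ej => a b /= <- hc.
      have eb := adj _ _ hc; subst j.
      have := o_false y a ltac:(have := vL2.1 _ hc; rewrite /=; lia).
      rewrite e2 (lay_pair _ vL2.2 hc).1 Hj andbF => /(_ isT).
      rewrite /= hc; lia.
    + have := o_false y j ltac:(lia).
      rewrite e2 lay_notin // Hj => /(_ isT). lia.
  - lia.
  - lia.
move: main.
have -> : i + 1 = i.+1 by rewrite addn1.
have e3 : forall a b, (a.-1 = b) -> (a.-1, a) \in L2 -> (b, a) \in L2 by move=> a b <-.
case ha: ((i, i.+1) \in L2); case hb: ((j.-1, j) \in L2) => /= hm.
- split; first lia. split=> hj; first by left.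
  split=> //; subst j; apply: e3 hb; lia.
- split; first lia. split=> hj; first by left.
  exfalso; move: hm; clear -hj; lia.
- split; first lia. split=> hj; first by right; subst j; apply: e3 hb; lia.
  exfalso; move: hm; clear -hj; lia.
- split; first lia. split=> hj; exfalso; move: hm; clear -hj; lia.
Qed.
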